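(* Every affine equivariant integrator map is affine functionally equivariant; that is, if $\phi$ is affine equivariant, then for all Banach spaces $Y,Z$, every affine map $F\colon Y\to Z$, and every $f\in\mathfrak{X}(Y)$, with $g\in\mathfrak{X}(Y\times Z)$ given by $g(y,z)=\bigl(f(y),F'(y)f(y)\bigr)$, we have $\phi(f)\sim_{(\mathrm{id},F)}\phi(g)$.
   Context: All spaces are real Banach spaces; $\mathfrak{X}(Y)$ denotes the set of smooth vector fields on $Y$. An integrator map $\phi$ is a collection of smooth maps $\phi_Y\colon\mathfrak{X}(Y)\to\mathfrak{X}(Y)$, one for each Banach space $Y$; write $\phi(f)=\phi_Y(f)$. For a Gâteaux differentiable $\chi\colon Y\to U$, $f\in\mathfrak{X}(Y)$ and $g\in\mathfrak{X}(U)$ are $\chi$-related, $f\sim_\chi g$, if $\chi'(y)f(y)=g(\chi(y))$ for all $y$. $\phi$ is affine equivariant if for every affine map $A\colon Y\to U$ between Banach spaces, $f\sim_A g$ implies $\phi(f)\sim_A\phi(g)$. The map $(\mathrm{id},F)\colon Y\to Y\times Z$ is $y\mapsto(y,F(y))$. *)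

(* Defs.v *)
(* Real Banach spaces = [completeNormedModType R]
   for an arbitrary [R : realType]. *)
From HB Require Import structures.
From mathcomp Require Import all_boot all_order all_algebra.
From mathcomp Require Import all_classical all_reals all_analysis.
Set Implicit Arguments. Unset Strict Implicit. Unset Printing Implicit Defensive.
Import Order.TTheory GRing.Theory Num.Theory numFieldNormedType.Exports.
Local Open Scope ring_scope.
Local Open Scope classical_set_scope.

(** The product of two Banach spaces is a Banach space (the library provides
    the normed-module structure on [U * V] but not completeness). *)
Section prod_complete.
Variables (R : realType) (Y Z : completeNormedModType R).
Let P : normedModType R := (Y * Z)%type.
Lemma prod_cauchy_cvg (F : set_system P) :
  ProperFilter F -> cauchy F -> cvg F.
Proof.
move=> FF /cauchy_ballP Fc.
have c1 : cauchy (fst @ F).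
  apply/cauchy_ballP => e e0; rewrite near_map2.
  by move: (Fc e e0); apply: filterS => -[x y] [].
have c2 : cauchy (snd @ F).
  apply/cauchy_ballP => e e0; rewrite near_map2.
  by move: (Fc e e0); apply: filterS => -[x y] [].
have /cauchy_cvg h1 := c1. have /cauchy_cvg h2 := c2.
apply/cvg_ex; exists (lim (fst @ F), lim (snd @ F)).
have := cvg_pair h1 h2 => /(_ FF).
move=> /(_ _ _) h.
have e : (fun x : P => (x.1, x.2)) = id by apply: funext => -[].
by rewrite e in h; exact: h.
Qed.
HB.instance Definition _ := Uniform_isComplete.Build (Y * Z)%type prod_cauchy_cvg.
End prod_complete.

Section defs.
Variable R : realType.

(** Smoothness (C^oo in the Fréchet sense).  [D k x] is the k-th Fréchet
    derivative of [f] at [x], viewed as a k-multilinear map (its arguments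
    are given as a list of k vectors). *)
Definition smooth (V W : normedModType R) (f : V -> W) : Prop :=
  exists D : nat -> V -> seq V -> W,
  [/\ forall x, D 0%N x [::] = f x,
      forall k x vs, size vs = k -> linear (fun h => D k.+1 x (h :: vs)),
      forall k x, exists C : R, forall vs, size vs = k ->
          all (fun v => `|v| <= 1) vs -> `|D k x vs| <= C &
      forall k x (e : R), 0 < e -> \forall h \near (0 : V), forall vs,
          size vs = k -> all (fun v => `|v| <= 1) vs ->
          `|D k (x + h) vs - D k x vs - D k.+1 x (h :: vs)| <= e * `|h| ].

Definition VF (Y : completeNormedModType R) := {f : Y -> Y | smooth f}.

Definition gateaux_differentiable (V W : normedModType R) (chi : V -> W) :=
  forall y, (forall v, derivable chi y v) /\
            linear (fun v => 'D_v chi y) /\ continuous (fun v => 'D_v chi y).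

Definition related (V W : normedModType R) (chi : V -> W)
    (f : V -> V) (g : W -> W) :=
  gateaux_differentiable chi /\ forall y, 'D_(f y) chi y = g (chi y).

Definition affine (V W : normedModType R) (A : V -> W) :=
  exists (L : V -> W) (c : W), [/\ linear L, continuous L & forall x, A x = L x + c].

Definition integrator_map :=
  forall Y : completeNormedModType R, VF Y -> VF Y.

Definition affine_equivariant (phi : integrator_map) :=
  forall (Y U : completeNormedModType R) (A : Y -> U) (f : VF Y) (g : VF U),
    affine A -> related A (sval f) (sval g) ->
    related A (sval (phi Y f)) (sval (phi U g)).

Definition id_pair (Y Z : completeNormedModType R) (F : Y -> Z) :
  Y -> (Y * Z)%type := fun y => (y, F y).

End defs.

(* Main.v *)
Require Import Defs.
From HB Require Import structures.
From mathcomp Require Import all_boot all_order all_algebra.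
From mathcomp Require Import all_classical all_reals all_analysis.
Import Order.TTheory GRing.Theory Num.Theory numFieldNormedType.Exports.
Local Open Scope ring_scope.
Local Open Scope classical_set_scope.

Section aux.
Variables (R : realType) (V W : normedModType R).

Lemma affine_deriv_cvg (A L : V -> W) (c : W) (y v : V) :
  linear L -> (forall x, A x = L x + c) ->
  (fun h : R => h^-1 *: ((A \o shift y) (h *: v) - A y)) @ 0^' --> L v.
Proof.
move=> Ll HA; apply: cvg_near_cst.
near=> h.
have hn0 : h != 0 by near: h; exact: nbhs_dnbhs_neq.
rewrite /= !HA.
have -> : L (h *: v + y) = h *: L v + L y.
  by have := Ll h v y; rewrite /= => ->.
by rewrite -(addrA (h *: L v)) addrK scalerA mulVf // scale1r.
Unshelve. all: by end_near.
Qed.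

Lemma affine_derive (A L : V -> W) (c : W) (y v : V) :
  linear L -> (forall x, A x = L x + c) ->
  derivable A y v /\ 'D_v A y = L v.
Proof.
move=> Ll HA; have h := (@affine_deriv_cvg A L c y v Ll HA); split.
  by apply/cvg_ex; exists (L v).
exact: cvg_lim h.
Qed.

Lemma affine_gateaux (A : V -> W) : affine A -> gateaux_differentiable A.
Proof.
move=> [L [c [Ll Lc HA]]] y.
have E : (fun v => 'D_v A y) = L.
  by apply: funext => v; case: (@affine_derive A L c y v Ll HA).
split; first by move=> v; case: (@affine_derive A L c y v Ll HA).
by rewrite E.
Qed.

End aux.

Theorem proposition2p6 (R : realType) (phi : integrator_map R) :
  affine_equivariant phi ->
  forall (Y Z : completeNormedModType R) (F : Y -> Z)
         (f : VF Y) (g : VF (Y * Z)%type),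
    affine F ->
    (forall (y : Y) (z : Z), sval g (y, z) = (sval f y, 'D_(sval f y) F y)) ->
    related (id_pair F) (sval (phi Y f)) (sval (phi (Y * Z)%type g)).
Proof.
move=> He Y Z F f g hF hg.
have hA : affine (id_pair F).
  case: hF => [L [c [Ll Lc HF]]].
  exists (fun x => (x, L x)), (0, c); split.
  - move=> a u w; rewrite /=; congr (_, _).
    by have := Ll a u w.
  - move=> x; apply: cvg_pair => //; exact: Lc.
  - by move=> x; rewrite /id_pair HF; congr (_, _); rewrite /= addr0.
apply: He => //; split; first exact: affine_gateaux.
move=> y; have -> : sval g (id_pair F y) = (sval f y, 'D_(sval f y) F y) by exact: hg.
case: hF => [L [c [Ll Lc HF]]].
have L2 : linear (fun x : Y => (x, L x) : (Y * Z)%type).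
  by move=> a u w; rewrite /=; congr (_, _); have := Ll a u w.
have H2 : forall x, id_pair F x = (x, L x) + (0, c).
  by move=> x; rewrite /id_pair HF; congr (_, _); rewrite /= addr0.
have E := (@affine_derive R Y (Y * Z)%type (id_pair F) (fun x => (x, L x)) (0, c) y (sval f y) L2 H2).2.
rewrite E (@affine_derive R Y Z F L c y (sval f y) Ll HF).2.
by [].
Qed.
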